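(* Let $(\mathsf P,\mathcal O)$ be a semitopology and $p\in\mathsf P$. Then $p$ is regular if and only if $p$ is weakly regular and unconflicted.
   Context: A semitopology is a pair $(\mathsf P,\mathcal O)$ where $\mathsf P$ is a set and $\mathcal O\subseteq\mathcal P(\mathsf P)$ contains $\varnothing$ and $\mathsf P$ and is closed under arbitrary unions. Write $X\between Y$ when $X\cap Y\neq\varnothing$. $T$ is topen when it is nonempty, open, and for all open $O,O'$, $O\between T\between O'$ implies $O\between O'$. Points $p,p'$ are intertwined (written $p\between p'$) when every open set containing $p$ intersects every open set containing $p'$; $I(p)$ is the set of points intertwined with $p$; $K(p)=\mathrm{int}(I(p))$ where $\mathrm{int}(R)$ is the union of all open subsets of $R$. $p$ is regular when $p\in K(p)$ and $K(p)$ is topen; weakly regular when $p\in K(p)$. $p$ is unconflicted when for all $p',p''$, $p'\between p$ and $p\between p''$ imply $p'\between p''$ (otherwise $p$ is conflicted). *)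

(* Defs.v *)
From Stdlib Require Import Classical.

Record semitopology : Type := {
  pts :> Type;
  is_open : (pts -> Prop) -> Prop;
  open_empty : is_open (fun _ => False);
  open_full : is_open (fun _ => True);
  open_union : forall (I : Type) (F : I -> pts -> Prop),
      (forall i, is_open (F i)) -> is_open (fun x => exists i, F i x)
}.

Section Defs.
Variable S : semitopology.

Definition meets (X Y : S -> Prop) : Prop := exists x, X x /\ Y x.

Definition topen (T : S -> Prop) : Prop :=
  (exists x, T x) /\ is_open S T /\
  forall O O', is_open S O -> is_open S O' -> meets O T -> meets T O' -> meets O O'.

Definition intertwined (p p' : S) : Prop :=
  forall O O', is_open S O -> is_open S O' -> O p -> O' p' -> meets O O'.

Definition I_set (p : S) : S -> Prop := fun p' => intertwined p p'.

Definition interior (R : S -> Prop) : S -> Prop :=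
  fun x => exists O, is_open S O /\ (forall y, O y -> R y) /\ O x.

Definition K_set (p : S) : S -> Prop := interior (I_set p).

Definition regular (p : S) : Prop := K_set p p /\ topen (K_set p).
Definition weakly_regular (p : S) : Prop := K_set p p.
Definition unconflicted (p : S) : Prop :=
  forall p' p'', intertwined p' p -> intertwined p p'' -> intertwined p' p''.
End Defs.

(* Main.v *)
Require Import Defs.
From Stdlib Require Import Classical FunctionalExtensionality PropExtensionality.

Lemma interior_open (S : semitopology) (R : S -> Prop) : is_open S (interior S R).
Proof.
  pose (F := (fun i => proj1_sig i) : {O : S -> Prop | is_open S O /\ forall y, O y -> R y} -> S -> Prop).
  assert (H : is_open S (fun x => exists i, F i x)).
  { apply open_union. intros i. exact (proj1 (proj2_sig i)). }
  replace (interior S R) with (fun x => exists i, F i x); [exact H|].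
  apply functional_extensionality; intro x; apply propositional_extensionality; split.
  - intros [[O [HO HR]] Hx]. exists O. auto.
  - intros [O [HO [HR Hx]]]. exists (exist _ O (conj HO HR)). exact Hx.
Qed.

Lemma inter_sym (S : semitopology) (a b : S) : intertwined S a b -> intertwined S b a.
Proof.
  intros H O O' HO HO' Ha Hb. destruct (H O' O HO' HO Hb Ha) as [z [z1 z2]].
  exists z; auto.
Qed.

Theorem theorem5p28 (S : semitopology) (p : S) :
  regular S p <-> (weakly_regular S p /\ unconflicted S p).
Proof.
  split.
  - intros [Hp [_ [HKo HT]]]. split; [exact Hp|].
    intros p' p'' H1 H2 O O' HO HO' Hx Hy.
    exact (HT O O' HO HO' (H1 O (K_set S p) HO HKo Hx Hp) (H2 (K_set S p) O' HKo HO' Hp Hy)).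
  - intros [Hp Hu]. split; [exact Hp|]. split; [exists p; exact Hp|].
    split; [apply interior_open|].
    intros O O' HO HO' [x [Ox Kx]] [y [Ky O'y]].
    destruct Kx as [U [_ [HU Ux]]]. destruct Ky as [V [_ [HV Vy]]].
    assert (Ix : intertwined S p x) by exact (HU x Ux).
    assert (Iy : intertwined S p y) by exact (HV y Vy).
    exact (Hu x y (inter_sym S p x Ix) Iy O O' HO HO' Ox O'y).
Qed.
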